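(* Let $\nabla$ be an ES basic fusion operator with representing basic assignment $\Phi\mapsto\succeq_\Phi$. The following are equivalent: (i) $\nabla$ satisfies (ESF-D); (ii) for every society $N$ there is $d_N\in N$ such that for every $N$-profile $\Phi$ and every $E\in\mathcal E$ with $|[\![B(E)]\!]|\le 2$, $B(\nabla(\Phi,E))\vdash B(\nabla(E_{d_N},E))$; (iii) for every society $N$ there is $d_N\in N$ such that for every $N$-profile $\Phi$ and all interpretations $w,w'$, if $w\succ_{E_{d_N}}w'$ then $w\succ_\Phi w'$.
   Context: Setting: epistemic space $(\mathcal E,B,\mathcal L_{\mathcal P})$ ($\mathcal E$ nonempty, $B:\mathcal E\to$ propositional formulas over finite $\mathcal P$, image modulo equivalence exactly the consistent formulas; $\mathcal W_{\mathcal P}$ valuations, $[\![\phi]\!]$ models); agents: well-ordered set $\mathcal S$; society: nonempty finite $N\subseteq\mathcal S$; $N$-profile $\Phi:N\to\mathcal E$, $E_i=\Phi(i)$, identified with $E_i$ if $N=\{i\}$; profiles on $\{i_1<\dots<i_n\}$, $\{j_1<\dots<j_m\}$ equivalent if $n=m$ and entries coincide position-wise. ES basic fusion operator: a map $\nabla(\Phi,E)\in\mathcal E$ with (ESF1) $B(\nabla(\Phi,E))\vdash B(E)$; (ESF2) equivalent profiles and $B(E)\equiv B(E')$ give equivalent $B(\nabla)$; (ESF3) if $B(E)\equiv B(E')\wedge B(E'')$ then $B(\nabla(\Phi,E'))\wedge B(E'')\vdash B(\nabla(\Phi,E))$; (ESF4) if moreover $B(\nabla(\Phi,E'))\wedge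 B(E'')\nvdash\bot$ then $B(\nabla(\Phi,E))\vdash B(\nabla(\Phi,E'))\wedge B(E'')$. Representing basic assignment: the unique $\Phi\mapsto\succeq_\Phi$ (total preorders on $\mathcal W_{\mathcal P}$, $\succ$ strict part, equal on equivalent profiles) with $[\![B(\nabla(\Phi,E))]\!]=\max([\![B(E)]\!],\succeq_\Phi)$, $\max(C,\succeq)=\{c\in C:c\succeq x\ \forall x\in C\}$. (ESF-D): for every society $N$ there exists $d_N\in N$ such that for every $N$-profile $\Phi$ and every $E$, $B(\nabla(\Phi,E))\vdash B(\nabla(E_{d_N},E))$. *)

(* Defs.v *)
From HB Require Import structures.
From mathcomp Require Import all_boot all_order.
Set Implicit Arguments. Unset Strict Implicit. Unset Printing Implicit Defensive.
Import Order.TTheory.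

Inductive form (P : Type) : Type :=
  | FVar of P
  | FTop
  | FBot
  | FNeg of form P
  | FAnd of form P & form P
  | FOr of form P & form P
  | FImp of form P & form P.
Arguments FTop {P}. Arguments FBot {P}.

Definition valuation (P : finType) := {ffun P -> bool}.

Fixpoint eval (P : finType) (w : valuation P) (f : form P) : bool :=
  match f with
  | FVar p => w p
  | FTop => true
  | FBot => false
  | FNeg g => ~~ eval w g
  | FAnd g h => eval w g && eval w h
  | FOr g h => eval w g || eval w h
  | FImp g h => eval w g ==> eval w h
  end.

Definition models (P : finType) (f : form P) : {set valuation P} :=
  [set w | eval w f].

(* phi |- psi  (classical propositional consequence, via soundness/completeness) *)
Definition entails (P : finType) (f g : form P) : Prop := models f \subset models g.
Definition fequiv (P : finType) (f g : form P) : Prop := models f = models g.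
Definition consistent (P : finType) (f : form P) : Prop := ~ entails f FBot.

Definition epistemic_space (P : finType) (E : Type) (B : E -> form P) : Prop :=
  inhabited E /\
  (forall e, consistent (B e)) /\
  (forall f : form P, consistent f -> exists e, fequiv (B e) f).

(* A society N is a nonempty finite subset of S, represented as the strictly
   increasing list of its elements.  An N-profile is represented by a function
   Phi : S -> E, of which only the values on N matter (E_i = Phi i). *)
Definition well_ordered (d : Order.disp_t) (S : orderType d) : Prop :=
  well_founded (fun x y : S => (x < y)%O).

Definition society (d : Order.disp_t) (S : orderType d) (N : seq S) : Prop :=
  sorted (fun x y : S => (x < y)%O) N /\ N <> [::].

Definition prof_equiv (d : Order.disp_t) (S : orderType d) (E : Type)
  (N1 : seq S) (Phi1 : S -> E) (N2 : seq S) (Phi2 : S -> E) : Prop :=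
  map Phi1 N1 = map Phi2 N2.

Definition ES_basic_fusion (P : finType) (E : Type) (B : E -> form P)
  (d : Order.disp_t) (S : orderType d)
  (nabla : seq S -> (S -> E) -> E -> E) : Prop :=
  (forall N Phi e, society N -> entails (B (nabla N Phi e)) (B e)) /\
  (forall N1 Phi1 N2 Phi2 e e', society N1 -> society N2 ->
     prof_equiv N1 Phi1 N2 Phi2 -> fequiv (B e) (B e') ->
     fequiv (B (nabla N1 Phi1 e)) (B (nabla N2 Phi2 e'))) /\
  (forall N Phi e e' e'', society N ->
     fequiv (B e) (FAnd (B e') (B e'')) ->
     entails (FAnd (B (nabla N Phi e')) (B e'')) (B (nabla N Phi e))) /\
  (forall N Phi e e' e'', society N ->
     fequiv (B e) (FAnd (B e') (B e'')) ->
     consistent (FAnd (B (nabla N Phi e')) (B e'')) ->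
     entails (B (nabla N Phi e)) (FAnd (B (nabla N Phi e')) (B e''))).

Definition total_preorder (T : Type) (r : rel T) : Prop :=
  transitive r /\ total r.

Definition strict (T : Type) (r : rel T) : rel T := fun x y => r x y && ~~ r y x.

Definition maxset_rel (T : finType) (C : {set T}) (r : rel T) : {set T} :=
  [set c in C | [forall x in C, r c x]].

Definition represents (P : finType) (E : Type) (B : E -> form P)
  (d : Order.disp_t) (S : orderType d)
  (nabla : seq S -> (S -> E) -> E -> E)
  (pre : seq S -> (S -> E) -> rel (valuation P)) : Prop :=
  (forall N Phi, society N -> total_preorder (pre N Phi)) /\
  (forall N1 Phi1 N2 Phi2, society N1 -> society N2 ->
     prof_equiv N1 Phi1 N2 Phi2 -> pre N1 Phi1 = pre N2 Phi2) /\
  (forall N Phi e, society N ->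
     models (B (nabla N Phi e)) = maxset_rel (models (B e)) (pre N Phi)).

(* ---------- (ESF-D) ----------  The single-agent profile E_{d_N} is the
   profile on the society [:: dN] with entry Phi dN. *)
Definition ESF_D (P : finType) (E : Type) (B : E -> form P)
  (d : Order.disp_t) (S : orderType d)
  (nabla : seq S -> (S -> E) -> E -> E) : Prop :=
  forall N, society N -> exists2 dN, dN \in N &
    forall (Phi : S -> E) (e : E),
      entails (B (nabla N Phi e)) (B (nabla [:: dN] Phi e)).

Definition cond_ii (P : finType) (E : Type) (B : E -> form P)
  (d : Order.disp_t) (S : orderType d)
  (nabla : seq S -> (S -> E) -> E -> E) : Prop :=
  forall N, society N -> exists2 dN, dN \in N &
    forall (Phi : S -> E) (e : E), #|models (B e)| <= 2 ->
      entails (B (nabla N Phi e)) (B (nabla [:: dN] Phi e)).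

Definition cond_iii (P : finType) (E : Type)
  (d : Order.disp_t) (S : orderType d)
  (pre : seq S -> (S -> E) -> rel (valuation P)) : Prop :=
  forall N, society N -> exists2 dN, dN \in N &
    forall (Phi : S -> E) (w w' : valuation P),
      strict (pre [:: dN] Phi) w w' -> strict (pre N Phi) w w'.

(* Main.v *)
Require Import Defs.
From HB Require Import structures.
From mathcomp Require Import all_boot all_order.
Set Implicit Arguments. Unset Strict Implicit. Unset Printing Implicit Defensive.

Definition charf (P : finType) (w : valuation P) : form P :=
  foldr (fun p f => FAnd (if w p then FVar p else FNeg (FVar p)) f) FTop (enum P).

Lemma eval_charf (P : finType) (w v : valuation P) : eval v (charf w) = (v == w).
Proof.
rewrite /charf.
have H : forall s, eval v (foldr (fun p f => FAnd (if w p then FVar p else FNeg (FVar p)) f) FTop s)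
   = all (fun p => v p == w p) s.
  elim=> [|p s IH] //=; rewrite IH.
  by case: (w p) => /=; rewrite ?eqb_id ?eqbF_neg.
rewrite H; apply/allP/eqP => [h|-> //].
by apply/ffunP => p; apply/eqP; apply: h; rewrite mem_enum.
Qed.

Lemma single_soc (d : Order.disp_t) (S : orderType d) (x : S) : society [:: x].
Proof. by split. Qed.

Theorem mainTheorem13 (P : finType) (E : Type) (B : E -> form P)
  (d : Order.disp_t) (S : orderType d)
  (nabla : seq S -> (S -> E) -> E -> E)
  (pre : seq S -> (S -> E) -> rel (valuation P)) :
  epistemic_space B -> well_ordered S ->
  ES_basic_fusion B nabla -> represents B nabla pre ->
  [/\ ESF_D B nabla <-> cond_ii B nabla,
      cond_ii B nabla <-> cond_iii pre &
      cond_iii pre <-> ESF_D B nabla].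
Proof.
move=> [_ [_ Hdef]] _ _ [Htp [_ Hrep]].
have i_ii : ESF_D B nabla -> cond_ii B nabla.
  move=> H N sN; have [dN dNin Hd] := H N sN; exists dN => // Phi e _; exact: Hd.
have iii_i : cond_iii pre -> ESF_D B nabla.
  move=> H N sN; have [dN dNin Hd] := H N sN; exists dN => // Phi e.
  rewrite /entails (Hrep _ _ _ sN) (Hrep _ _ _ (single_soc dN)).
  apply/subsetP => c; rewrite !inE => /andP[cC /forall_inP hc]; rewrite cC /=.
  apply/forall_inP => x xC.
  have [_ tot] := Htp _ Phi (single_soc dN).
  case: (boolP (pre [:: dN] Phi c x)) => // nc.
  have st : strict (pre [:: dN] Phi) x c.
    by rewrite /strict nc andbT; move: (tot x c); rewrite (negbTE nc) orbF.
  move: (Hd Phi x c st); rewrite /strict => /andP[_ /negP]; case; exact: hc.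
have ii_iii : cond_ii B nabla -> cond_iii pre.
  move=> H N sN; have [dN dNin Hd] := H N sN; exists dN => // Phi w w' st.
  have cons : consistent (FOr (charf w) (charf w')).
    rewrite /consistent /entails /models => /subsetP /(_ w).
    by rewrite !inE /= eval_charf eqxx /=; move/(_ isT).
  have [e he] := Hdef _ cons.
  have me : models (B e) = [set w; w'].
    rewrite he; apply/setP => v; by rewrite !inE /= !eval_charf.
  have card2 : #|models (B e)| <= 2 by rewrite me cards2; case: (w != w').
  move: (Hd Phi e card2); rewrite /entails (Hrep _ _ _ sN) (Hrep _ _ _ (single_soc dN)) me.
  move/andP: st => [p1 p2].
  have [_ totN] := Htp _ Phi sN.
  move=> /subsetP sub.
  have w'nmax : w' \notin maxset_rel [set w; w'] (pre [:: dN] Phi).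
    rewrite inE negb_and; apply/orP; right; rewrite negb_forall_in.
    by apply/existsP; exists w; rewrite !inE eqxx /= p2.
  have w'nN : w' \notin maxset_rel [set w; w'] (pre N Phi).
    by apply/negP => /sub; apply/negP.
  move: w'nN; rewrite inE !inE eqxx orbT /= negb_forall_in => /existsP[x /andP[]].
  rewrite !inE => /orP[]/eqP -> hx.
    by rewrite /strict hx andbT; move: (totN w w'); rewrite (negbTE hx) orbF.
  by move: (totN w' w'); rewrite orbb (negbTE hx).
split; split; auto.
Qed.
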